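(* In the setting of the context, consider a Case 1 spacetime ($x_-(v)\equiv0$). If $(dx_+/dv)/x_+^2$ converges as $v\to\infty$ and $\lim_{v\to\infty}\frac{dx_+/dv}{x_+(v)^2}>-\frac{h_c}{2}$, then the spacetime is of Type 2.
   Context: Spherically symmetric spacetime $ds^2=-f(v,r)A(v,r)^2dv^2+2A(v,r)\,dr\,dv+r^2d\Omega^2$ with $A>0$, $f,A\to1$ as $r\to\infty$, $f(v,0)=1$, $\partial_rf(v,0)=\partial_rA(v,0)=0$; $f(v,\cdot)$ has exactly two zeros $r_+(v)>r_-(v)$ (outer/inner apparent horizons, AHs), $f=F(r-r_+)(r-r_-)$ with $F>0$, and $h=AF>0$. Assumptions: $\partial_v r_+<0$; $r_\pm(v)\to r_c$ as $v\to\infty$; the sign of $\partial_v r_-$ is constant; the $v\to\infty$ limits of $A,F,h$ behave as analytic functions of $r$, so all $\partial_r^n h$ converge as $v\to\infty$; $h_c=\lim_{v\to\infty}h(v,r_c)$. With $x=r-r_c$, $x_\pm=r_\pm-r_c$ and $h$ regarded as a function of $(v,x)$, radially outgoing null geodesics solve $dx/dv=\tfrac12h(v,x)(x-x_+(v))(x-x_-(v))$. Case 1 means $\partial_v r_-=0$. Type 1 (Case 1) means every outgoing null geodesic strictly between the two AHs crosses the outer AH (the inner AH is the event horizon); Type 2 means there is an event horizon strictly outside the inner AH. *)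

(* Defs.v *)
From Stdlib Require Import Reals Lra.
From Coquelicot Require Import Coquelicot.
Open Scope R_scope.

(* Case 1 (x_- == 0): radially outgoing null geodesic x(v), v >= v0, solving
   dx/dv = 1/2 h(v,x) (x - x_+(v)) (x - 0). *)
Definition outgoing_geodesic (h : R -> R -> R) (xp : R -> R) (v0 : R)
  (x : R -> R) : Prop :=
  forall v, v0 <= v -> is_derive x v (/2 * h v (x v) * (x v - xp v) * (x v - 0)).

(* Type 1: every outgoing null geodesic starting strictly between the AHs
   (0 < x < x_+) eventually reaches/crosses the outer AH. *)
Definition type1 (h : R -> R -> R) (xp : R -> R) : Prop :=
  forall v0 x, outgoing_geodesic h xp v0 x -> 0 < x v0 < xp v0 ->
    exists v, v0 <= v /\ xp v <= x v.

(* Type 2: there is an event horizon strictly outside the inner AH, i.e. an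
   outgoing null geodesic that stays forever strictly between the inner AH
   (x = 0) and the outer AH (x = x_+). *)
Definition type2 (h : R -> R -> R) (xp : R -> R) : Prop :=
  exists v0 x, outgoing_geodesic h xp v0 x /\
    forall v, v0 <= v -> 0 < x v < xp v.

(* Main.v *)
Require Import Defs.
From Stdlib Require Import Reals Lra Psatz Classical ClassicalEpsilon.
From Coquelicot Require Import Coquelicot.
Open Scope R_scope.

Lemma cont_eps (f : R -> R) v : continuous f v -> forall eps, 0 < eps ->
  exists d, 0 < d /\ forall u, Rabs (u - v) < d -> Rabs (f u - f v) < eps.
Proof.
  intros H eps Heps.
  assert (H1 := proj1 (filterlim_locally f (f v)) H (mkposreal eps Heps)).
  destruct H1 as [d Hd]. exists d. split. apply cond_pos. intros u Hu. apply (Hd u). exact Hu.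
Qed.

Lemma lip_cont (f : R -> R) M v : 0 < M ->
  (forall u, Rabs (f u - f v) <= M * Rabs (u - v)) -> continuous f v.
Proof.
  intros HM H. apply filterlim_locally. intros eps.
  assert (He : 0 < eps / M) by (apply Rdiv_lt_0_compat; [apply cond_pos | exact HM]).
  exists (mkposreal _ He). intros u Hu.
  change (Rabs (f u - f v) < eps). change (Rabs (u - v) < eps / M) in Hu.
  eapply Rle_lt_trans. apply H.
  apply Rmult_lt_compat_l with (r := M) in Hu; [|exact HM].
  replace (M * (eps / M)) with (pos eps) in Hu by (field; lra). exact Hu.
Qed.

Lemma pow_half_small C eps : 0 < eps -> exists N, forall n, (N <= n)%nat -> C * (/2)^n < eps.
Proof.
  intros He.
  assert (Hy : 0 < eps / (Rabs C + 1)) by (apply Rdiv_lt_0_compat; [lra | pose proof (Rabs_pos C); lra]).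
  destruct (pow_lt_1_zero (/2)) with (y := eps / (Rabs C + 1)) as [N HN].
  { rewrite Rabs_pos_eq; lra. } exact Hy.
  exists N. intros n Hn. specialize (HN n Hn).
  assert (Hp : 0 < (/2)^n) by (apply pow_lt; lra).
  rewrite Rabs_pos_eq in HN by lra.
  apply Rmult_lt_compat_l with (r := Rabs C + 1) in HN; [|pose proof (Rabs_pos C); lra].
  replace ((Rabs C + 1) * (eps / (Rabs C + 1))) with eps in HN by (field; pose proof (Rabs_pos C); lra).
  pose proof (Rle_abs C). nra.
Qed.

Lemma le_of_geom A C : (forall n, A <= C * (/2)^n) -> A <= 0.
Proof.
  intros H. destruct (Rle_dec A 0) as [|Hn]; [auto|].
  destruct (pow_half_small C A) as [N HN]; [lra|].
  specialize (HN N (le_n N)). specialize (H N). lra.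
Qed.

Lemma geom_cauchy (u : nat -> R) C : (forall n, Rabs (u (S n) - u n) <= C * (/2)^n) ->
  exists l, is_lim_seq u l /\ forall n, Rabs (u n - l) <= 2*C*(/2)^n.
Proof.
  intros H.
  assert (Hk : forall n k, Rabs (u (n+k)%nat - u n) <= 2*C*(/2)^n - 2*C*(/2)^(n+k)).
  { intros n k. induction k as [|k IH].
    - rewrite Nat.add_0_r. unfold Rminus. rewrite Rplus_opp_r, Rabs_R0. lra.
    - rewrite Nat.add_succ_r.
      replace (u (S (n + k)) - u n) with ((u (S (n+k)) - u (n+k)%nat) + (u (n+k)%nat - u n)) by ring.
      eapply Rle_trans. apply Rabs_triang. specialize (H (n+k)%nat).
      replace (2 * C * (/ 2) ^ S (n + k)) with (C * (/2)^(n+k)) by (simpl; field). lra. }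
  assert (Hm : forall n m, (n <= m)%nat -> Rabs (u m - u n) <= 2*C*(/2)^n).
  { intros n m Hnm. replace m with (n + (m - n))%nat by lia.
    eapply Rle_trans. apply Hk.
    assert (0 <= 2*C*(/2)^(n + (m-n))). { specialize (H 0%nat). pose proof (Rabs_pos (u 1%nat - u 0%nat)).
      assert (0 <= C) by (simpl in H; lra). apply Rmult_le_pos. lra. apply pow_le. lra. }
    lra. }
  assert (Hc : ex_finite_lim_seq u).
  { apply ex_lim_seq_cauchy_corr. intros eps.
    destruct (pow_half_small (2*C) eps) as [N HN]. apply cond_pos.
    exists N. intros n m Hn Hm'.
    destruct (Nat.le_ge_cases n m) as [Hnm|Hnm].
    - rewrite Rabs_minus_sym. eapply Rle_lt_trans. apply (Hm n m Hnm). apply HN; exact Hn.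
    - eapply Rle_lt_trans. apply (Hm m n Hnm). apply HN; exact Hm'. }
  destruct Hc as [l Hl]. exists l. split. exact Hl.
  intros n. apply le_epsilon. intros eps He.
  destruct (proj1 (is_lim_seq_Reals u l) Hl eps He) as [N HN].
  specialize (HN (max N n) (Nat.le_max_l _ _)). unfold R_dist in HN.
  specialize (Hm n (max N n) (Nat.le_max_r _ _)).
  pose proof (Rabs_triang (-(u (max N n) - u n)) (u (max N n) - l)) as T.
  replace (-(u (max N n) - u n) + (u (max N n) - l)) with (u n - l) in T by ring.
  rewrite Rabs_Ropp in T. eapply Rle_trans; [exact T|]. apply Rplus_le_compat; [exact Hm | left; exact HN].
Qed.

Lemma fold_max_in (g : R * (R * unit) -> R) (l : list (R * (R * unit))) t :
  List.In t l -> g t <= List.fold_right (fun t acc => Rmax (g t) acc) 0 l.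
Proof.
  induction l as [|t' l IH]; simpl. tauto.
  intros [<-|Hi]. apply Rmax_l. eapply Rle_trans. apply IH, Hi. apply Rmax_r.
Qed.

Lemma bound2d (f : R -> R -> R) a b c d :
  (forall x y, a <= x <= b -> c <= y <= d ->
     continuous (fun p : R*R => f (fst p) (snd p)) (x,y)) ->
  exists D, forall x y, a <= x <= b -> c <= y <= d -> Rabs (f x y) <= D.
Proof.
  intros Hc.
  assert (Hex : forall t : R * (R * unit), exists e : posreal,
    a <= fst t <= b -> c <= fst (snd t) <= d -> forall x y, Rabs (x - fst t) < e ->
      Rabs (y - fst (snd t)) < e -> Rabs (f x y - f (fst t) (fst (snd t))) < 1).
  { intros [t1 [t2 u]]. simpl.
    destruct (classic (a <= t1 <= b /\ c <= t2 <= d)) as [[H1 H2]|Hn].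
    - specialize (Hc t1 t2 H1 H2).
      destruct (proj1 (filterlim_locally _ _) Hc (mkposreal 1 Rlt_0_1)) as [e He].
      exists e. intros _ _ x y Hx Hy. apply (He (x,y)). split; assumption.
    - exists (mkposreal 1 Rlt_0_1). intros H1 H2. exfalso. tauto. }
  set (delta := fun t => proj1_sig (constructive_indefinite_description _ (Hex t))).
  assert (Hd : forall t, a <= fst t <= b -> c <= fst (snd t) <= d -> forall x y,
      Rabs (x - fst t) < delta t -> Rabs (y - fst (snd t)) < delta t ->
      Rabs (f x y - f (fst t) (fst (snd t))) < 1).
  { intros t. unfold delta. destruct (constructive_indefinite_description _ (Hex t)) as [e He]. exact He. }
  pose proof (compactness_list 2 (a,(c,tt)) (b,(d,tt)) delta) as Hl.
  apply NNPP. intros Hno. apply Hl. intros [l Hl']. apply Hno.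
  exists (List.fold_right (fun t acc => Rmax ((fun t => Rabs (f (fst t) (fst (snd t))) + 1) t) acc) 0 l).
  intros x y Hx Hy.
  destruct (Hl' (x,(y,tt))) as [t [Hin [Hbt Hct]]]. { simpl. tauto. }
  pose proof (fold_max_in (fun t => Rabs (f (fst t) (fst (snd t))) + 1) l t Hin) as Hf.
  destruct t as [t1 [t2 []]]. simpl in Hbt, Hct, Hf.
  assert (Hk := Hd (t1,(t2,tt))). simpl in Hk.
  specialize (Hk (proj1 Hbt) (proj1 (proj2 Hbt)) x y (proj1 Hct) (proj1 (proj2 Hct))).
  pose proof (Rabs_triang_inv (f x y) (f t1 t2)). 
  eapply Rle_trans; [|exact Hf]. lra.
Qed.



Lemma cont_neg g v : continuous g v -> g v < 0 -> exists eta, 0 < eta /\ forall u, Rabs (u - v) < eta -> g u < 0.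
Proof.
  intros H Hv. destruct (cont_eps g v H (- g v)) as [d [Hd Hu]]. lra.
  exists d. split. exact Hd. intros u Hu'. specialize (Hu u Hu'). apply Rabs_def2 in Hu. lra.
Qed.

Lemma cont_pos g v : continuous g v -> 0 < g v -> exists eta, 0 < eta /\ forall u, Rabs (u - v) < eta -> 0 < g u.
Proof.
  intros H Hv. destruct (cont_eps g v H (g v)) as [d [Hd Hu]]. lra.
  exists d. split. exact Hd. intros u Hu'. specialize (Hu u Hu'). apply Rabs_def2 in Hu. lra.
Qed.

Lemma deriv_neg_left g c d : is_derive g c d -> d < 0 ->
  exists eta, 0 < eta /\ forall u, c - eta < u < c -> g c < g u.
Proof.
  intros H Hd. apply is_derive_Reals in H.
  destruct (H (- d / 2)) as [delta Hdel]. lra.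
  exists delta. split. apply cond_pos. intros u Hu.
  assert (Hh : u - c <> 0) by lra.
  assert (Ha : Rabs (u - c) < delta) by (rewrite Rabs_left; lra).
  specialize (Hdel (u - c) Hh Ha). replace (c + (u - c)) with u in Hdel by ring.
  apply Rabs_def2 in Hdel. destruct Hdel as [H1 H2].
  set (q := (g u - g c) / (u - c)) in *.
  assert (Hq : g u - g c = q * (u - c)) by (unfold q; field; exact Hh).
  assert (q < 0) by lra. nra.
Qed.

Lemma barrier (a : R) (g1 g2 : R -> R) :
 (forall v, a <= v -> continuous g1 v) -> (forall v, a <= v -> continuous g2 v) ->
 g1 a < 0 -> g2 a < 0 ->
 (forall v, a < v -> g1 v <= 0 -> g2 v <= 0 -> g1 v = 0 -> exists d, is_derive g1 v d /\ d < 0) ->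
 (forall v, a < v -> g1 v <= 0 -> g2 v <= 0 -> g2 v = 0 -> exists d, is_derive g2 v d /\ d < 0) ->
 forall v, a <= v -> g1 v < 0 /\ g2 v < 0.
Proof.
  intros C1 C2 A1 A2 D1 D2 v Hv. apply NNPP. intros Hbad.
  set (E := fun t => a <= t <= v /\ forall u, a <= u <= t -> g1 u < 0 /\ g2 u < 0).
  assert (Ea : E a). { split. lra. intros u Hu. replace u with a by lra. tauto. }
  assert (Eb : bound E). { exists v. intros t [Ht _]. lra. }
  destruct (completeness E Eb (ex_intro _ a Ea)) as [c [Hub Hlub]].
  assert (Hac : a <= c) by (apply Hub, Ea).
  assert (Hcv : c <= v). { apply Hlub. intros t [Ht _]. lra. }
  assert (Hbelow : forall u, a <= u < c -> g1 u < 0 /\ g2 u < 0).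
  { intros u Hu. apply NNPP. intros Hn.
    assert (c <= u). { apply Hlub. intros t [Ht Ht2]. destruct (Rle_dec t u) as [|Hlt]. auto.
      exfalso. apply Hn. apply Ht2. lra. }
    lra. }
  assert (Hva : a < v). { destruct Hv as [|<-]. auto. exfalso. tauto. }
  assert (Hca : a < c).
  { destruct (cont_neg g1 a (C1 a (Rle_refl a)) A1) as [e1 [He1 H1]].
    destruct (cont_neg g2 a (C2 a (Rle_refl a)) A2) as [e2 [He2 H2]].
    set (t := Rmin v (a + Rmin e1 e2 / 2)).
    assert (Et : E t).
    { split. unfold t. split. apply Rmin_glb. lra. pose proof (Rmin_glb_lt _ _ _ He1 He2). lra. apply Rmin_l.
      intros u Hu. assert (Hu' : u <= a + Rmin e1 e2 / 2) by (eapply Rle_trans; [apply Hu | apply Rmin_r]).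
      pose proof (Rmin_l e1 e2). pose proof (Rmin_r e1 e2). pose proof (Rmin_glb_lt _ _ _ He1 He2).
      split; [apply H1 | apply H2]; rewrite Rabs_pos_eq; lra. }
    assert (t <= c) by (apply Hub, Et).
    assert (a < t). { unfold t. apply Rmin_glb_lt. lra. pose proof (Rmin_glb_lt _ _ _ He1 He2). lra. }
    lra. }
  assert (Hle : g1 c <= 0 /\ g2 c <= 0).
  { split; apply Rnot_lt_le; intros Hp.
    - destruct (cont_pos g1 c (C1 c Hac) Hp) as [e [He H]].
      set (u := c - Rmin e (c - a) / 2).
      pose proof (Rmin_l e (c-a)). pose proof (Rmin_r e (c-a)). assert (0 < Rmin e (c-a)) by (apply Rmin_glb_lt; lra).
      assert (0 < g1 u) by (apply H; unfold u; rewrite Rabs_left; lra).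
      assert (g1 u < 0) by (apply Hbelow; unfold u; lra). lra.
    - destruct (cont_pos g2 c (C2 c Hac) Hp) as [e [He H]].
      set (u := c - Rmin e (c - a) / 2).
      pose proof (Rmin_l e (c-a)). pose proof (Rmin_r e (c-a)). assert (0 < Rmin e (c-a)) by (apply Rmin_glb_lt; lra).
      assert (0 < g2 u) by (apply H; unfold u; rewrite Rabs_left; lra).
      assert (g2 u < 0) by (apply Hbelow; unfold u; lra). lra. }
  assert (Hz : g1 c = 0 \/ g2 c = 0).
  { apply NNPP. intros Hn.
    assert (B1 : g1 c < 0) by (destruct Hle as [[|]]; tauto).
    assert (B2 : g2 c < 0) by (destruct Hle as [_ [|]]; tauto).
    destruct Hcv as [Hcv|Hcv]; [|subst c; tauto].
    destruct (cont_neg g1 c (C1 c Hac) B1) as [e1 [He1 H1]].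
    destruct (cont_neg g2 c (C2 c Hac) B2) as [e2 [He2 H2]].
    pose proof (Rmin_l e1 e2). pose proof (Rmin_r e1 e2). pose proof (Rmin_glb_lt _ _ _ He1 He2).
    set (t := Rmin v (c + Rmin e1 e2 / 2)).
    assert (Ht1 : t <= v) by apply Rmin_l.
    assert (Ht2 : t <= c + Rmin e1 e2 / 2) by apply Rmin_r.
    assert (Ht3 : c < t) by (unfold t; apply Rmin_glb_lt; lra).
    assert (Et : E t).
    { split. lra. intros u Hu. destruct (Rlt_le_dec u c) as [Hl|Hl]. apply Hbelow; lra.
      split; [apply H1 | apply H2]; rewrite Rabs_pos_eq; lra. }
    assert (t <= c) by (apply Hub, Et). lra. }
  destruct Hz as [Hz|Hz].
  - destruct (D1 c Hca (proj1 Hle) (proj2 Hle) Hz) as [d [Hd Hdn]].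
    destruct (deriv_neg_left g1 c d Hd Hdn) as [e [He H]].
    pose proof (Rmin_l e (c-a)). pose proof (Rmin_r e (c-a)). assert (0 < Rmin e (c-a)) by (apply Rmin_glb_lt; lra).
    set (u := c - Rmin e (c - a) / 2).
    assert (g1 c < g1 u) by (apply H; unfold u; lra).
    assert (g1 u < 0) by (apply Hbelow; unfold u; lra). lra.
  - destruct (D2 c Hca (proj1 Hle) (proj2 Hle) Hz) as [d [Hd Hdn]].
    destruct (deriv_neg_left g2 c d Hd Hdn) as [e [He H]].
    pose proof (Rmin_l e (c-a)). pose proof (Rmin_r e (c-a)). assert (0 < Rmin e (c-a)) by (apply Rmin_glb_lt; lra).
    set (u := c - Rmin e (c - a) / 2).
    assert (g2 c < g2 u) by (apply H; unfold u; lra).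
    assert (g2 u < 0) by (apply Hbelow; unfold u; lra). lra.
Qed.

Definition RI (g : R -> R) (a b : R) : R := RInt g a b.

Lemma RInt_ex (g : R -> R) a b : (forall s, continuous g s) -> ex_RInt g a b.
Proof. intros Hg. apply (ex_RInt_continuous (V:=R_CompleteNormedModule)). intros; apply Hg. Qed.

Lemma RInt_deriv (g : R -> R) a : (forall s, continuous g s) ->
  forall v, is_derive (fun w => RI g a w) v (g v).
Proof.
  intros Hg v. unfold RI. apply (is_derive_RInt g (fun w => RInt g a w) a v).
  - apply filter_forall. intros b. exact (RInt_correct (V:=R_CompleteNormedModule) g a b (RInt_ex g a b Hg)).
  - apply Hg.
Qed.


Lemma RInt_abs_bound (g : R -> R) a b M : a <= b -> (forall s, continuous g s) ->
  (forall s, a <= s <= b -> Rabs (g s) <= M) -> Rabs (RI g a b) <= M * (b - a).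
Proof.
  intros Hab Hg HM. unfold RI. rewrite Rmult_comm. apply abs_RInt_le_const; auto. apply RInt_ex, Hg.
Qed.

Lemma RInt_diff_bound (g : R -> R) T0 a b M : (forall s, continuous g s) ->
  (forall s, T0 <= s -> Rabs (g s) <= M) -> T0 <= a -> T0 <= b ->
  Rabs (RI g T0 a - RI g T0 b) <= M * Rabs (a - b).
Proof.
  intros Hg HM Ha Hb.
  assert (Hch : RI g T0 b + RI g b a = RI g T0 a).
  { unfold RI. apply (RInt_Chasles g T0 b a); apply RInt_ex, Hg. }
  replace (RI g T0 a - RI g T0 b) with (RI g b a) by lra.
  destruct (Rle_dec b a) as [H|H].
  - rewrite (Rabs_pos_eq (a - b)) by lra. apply RInt_abs_bound; auto. intros s Hs; apply HM; lra.
  - assert (Hs : RI g b a = - RI g a b).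
    { unfold RI. rewrite <- opp_RInt_swap by (apply RInt_ex, Hg). reflexivity. }
    rewrite Hs, Rabs_Ropp.
    rewrite (Rabs_left (a - b)) by lra. replace (- (a - b)) with (b - a) by ring.
    apply RInt_abs_bound; auto. lra. intros s Hs'; apply HM; lra.
Qed.

Lemma RInt_exp_val K T0 s : 0 < K ->
  RI (fun u => exp (2*K*(u - T0))) T0 s = (exp (2*K*(s-T0)) - 1) / (2*K).
Proof.
  intros HK. unfold RI. apply is_RInt_unique.
  replace ((exp (2*K*(s-T0)) - 1) / (2*K)) with
    (minus ((fun u => exp (2*K*(u-T0)) / (2*K)) s) ((fun u => exp (2*K*(u-T0)) / (2*K)) T0)).
  2:{ simpl. unfold minus, plus, opp; simpl. replace (T0 - T0) with 0 by ring.
      rewrite Rmult_0_r, exp_0. field. lra. }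
  apply (is_RInt_derive (V:=R_CompleteNormedModule) (fun u => exp (2*K*(u-T0)) / (2*K)) (fun u => exp (2*K*(u - T0)))).
  - intros x _. auto_derive. auto. unfold Rminus. field. lra.
  - intros x _. apply continuous_exp_comp.
    apply (continuous_mult (fun _ => 2*K) (fun u => u - T0)). apply continuous_const.
    apply (continuous_minus (fun u => u) (fun _ => T0)). apply continuous_id. apply continuous_const.
Qed.

Fixpoint pic (G : R -> R -> R) (T0 x0 : R) (n : nat) : R -> R :=
  match n with
  | O => fun _ => x0
  | S n => fun v => x0 + RI (fun s => G s (pic G T0 x0 n s)) T0 v
  end.

Lemma exp_le_exp x y : x <= y -> exp x <= exp y.
Proof. intros [H|H]. left; apply exp_increasing, H. rewrite H; lra. Qed.

Lemma RI_scal (f : R -> R) c a b : (forall s, continuous f s) ->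
  RI (fun u => c * f u) a b = c * RI f a b.
Proof. intros Hf. unfold RI. apply (RInt_scal (V:=R_CompleteNormedModule) f a b c). apply RInt_ex, Hf. Qed.

Lemma RI_minus (g1 g2 : R -> R) a b : (forall s, continuous g1 s) -> (forall s, continuous g2 s) ->
  RI g1 a b - RI g2 a b = RI (fun u => g1 u - g2 u) a b.
Proof.
  intros H1 H2. unfold RI. symmetry.
  apply (RInt_minus (V:=R_CompleteNormedModule) g1 g2 a b); apply RInt_ex; auto.
Qed.

Lemma cont_minus_fun (g1 g2 : R -> R) : (forall s, continuous g1 s) -> (forall s, continuous g2 s) ->
  forall s, continuous (fun u => g1 u - g2 u) s.
Proof. intros H1 H2 s. apply (continuous_minus g1 g2); auto. Qed.

Lemma RI_lip_bound (g1 g2 w : R -> R) a b : a <= b ->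
  (forall s, continuous g1 s) -> (forall s, continuous g2 s) -> (forall s, continuous w s) ->
  (forall u, a <= u <= b -> Rabs (g1 u - g2 u) <= w u) -> Rabs (RI g1 a b - RI g2 a b) <= RI w a b.
Proof.
  intros Hab H1 H2 Hw Hb. rewrite RI_minus by auto. unfold RI.
  eapply Rle_trans. apply abs_RInt_le. exact Hab. apply RInt_ex, cont_minus_fun; auto.
  apply RInt_le. exact Hab. apply RInt_ex. intros s. apply continuous_Rabs_comp, cont_minus_fun; auto.
  apply RInt_ex, Hw. intros u Hu. apply Hb. lra.
Qed.

Lemma RI_diff_const (g1 g2 : R -> R) a b c : a <= b ->
  (forall s, continuous g1 s) -> (forall s, continuous g2 s) ->
  (forall u, a <= u <= b -> Rabs (g1 u - g2 u) <= c) -> Rabs (RI g1 a b - RI g2 a b) <= c * (b - a).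
Proof.
  intros Hab H1 H2 Hb. rewrite RI_minus by auto. apply RInt_abs_bound; auto. apply cont_minus_fun; auto.
Qed.

Lemma Rmax_lip T0 a b : Rabs (Rmax T0 a - Rmax T0 b) <= Rabs (a - b).
Proof.
  unfold Rmax. destruct (Rle_dec T0 a), (Rle_dec T0 b); apply Rabs_le;
  pose proof (Rabs_pos (a - b)); pose proof (Rle_abs (a - b)); pose proof (Rle_abs (-(a - b)));
  rewrite Rabs_Ropp in *; lra.
Qed.

Lemma picard (G : R -> R -> R) (T0 x0 M : R) :
  0 < M ->
  (forall phi : R -> R, (forall s, continuous phi s) -> forall s, continuous (fun s => G s (phi s)) s) ->
  (forall s y, T0 <= s -> Rabs (G s y) <= M) ->
  (forall T, exists K, 0 < K /\ forall s y z, T0 <= s <= T -> Rabs (G s y - G s z) <= K * Rabs (y - z)) ->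
  exists x : R -> R, x T0 = x0 /\ (forall s, continuous x s) /\
    (forall v, T0 < v -> is_derive x v (G v (x v))).
Proof.
  intros HM Gc Gb GL.
  set (P := pic G T0 x0).
  assert (alg : forall p q : R, x0 + p - (x0 + q) = p - q) by (intros; ring).
  assert (Pc : forall n s, continuous (P n) s).
  { induction n as [|n IH]; intros s; simpl.
    - apply continuous_const.
    - apply (continuous_plus (fun _ => x0) (fun v => RI (fun s0 => G s0 (P n s0)) T0 v)).
      apply continuous_const.
      apply ex_derive_continuous. eexists. apply RInt_deriv. apply Gc, IH. }
  assert (PL : forall n a b, T0 <= a -> T0 <= b -> Rabs (P n a - P n b) <= M * Rabs (a - b)).
  { intros [|n] a b Ha Hb; unfold P; simpl.
    - unfold Rminus; rewrite Rplus_opp_r, Rabs_R0. apply Rmult_le_pos; [lra|apply Rabs_pos].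
    - rewrite alg. apply RInt_diff_bound; auto. }
  assert (P0 : forall n, P n T0 = x0).
  { intros [|n]; unfold P; simpl. auto. unfold RI at 1. rewrite RInt_point. apply Rplus_0_r. }
  assert (Bnd : forall T, exists C, 0 <= C /\ forall n s, T0 <= s <= T ->
             Rabs (P (S n) s - P n s) <= C * (/2)^n).
  { intros T. destruct (GL T) as [K [HK HKL]].
    set (B := M * Rabs (T - T0)).
    assert (HB : 0 <= B) by (apply Rmult_le_pos; [lra | apply Rabs_pos]).
    assert (Hn : forall n s, T0 <= s <= T -> Rabs (P (S n) s - P n s) <= B * (/2)^n * exp (2*K*(s - T0))).
    { induction n as [|n IH]; intros s Hs.
      - change (Rabs (x0 + RI (fun s0 => G s0 x0) T0 s - x0) <= B * 1 * exp (2*K*(s - T0))).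
        replace (x0 + RI (fun s0 => G s0 x0) T0 s - x0) with (RI (fun s0 => G s0 x0) T0 s) by ring.
        eapply Rle_trans. apply RInt_abs_bound. lra. apply (Gc (fun _ => x0)). intros; apply continuous_const.
        intros u Hu. apply Gb. lra.
        assert (1 <= exp (2*K*(s-T0))). { rewrite <- exp_0. apply exp_le_exp. apply Rmult_le_pos; lra. }
        assert (s - T0 <= Rabs (T - T0)) by (rewrite Rabs_pos_eq; lra).
        unfold B. rewrite Rmult_1_r. assert (M * (s - T0) <= M * Rabs (T - T0)) by (apply Rmult_le_compat_l; lra).
        eapply Rle_trans. exact H1. rewrite <- (Rmult_1_r (M * Rabs (T - T0))) at 1. apply Rmult_le_compat_l. exact HB. exact H.
      - change (Rabs ((x0 + RI (fun s0 => G s0 (P (S n) s0)) T0 s) - (x0 + RI (fun s0 => G s0 (P n s0)) T0 s))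
           <= B * (/2)^(S n) * exp (2*K*(s - T0))).
        rewrite alg.
        eapply Rle_trans. apply (RI_lip_bound _ _ (fun u => (K * (B * (/2)^n)) * exp (2*K*(u - T0)))).
        lra. apply Gc, Pc. apply Gc, Pc.
        intros u. apply (continuous_mult (fun _ => K * (B * (/ 2) ^ n)) (fun u => exp (2*K*(u - T0)))).
        apply continuous_const. apply continuous_exp_comp.
        apply (continuous_mult (fun _ => 2*K) (fun u => u - T0)). apply continuous_const.
        apply (continuous_minus (fun u => u) (fun _ => T0)). apply continuous_id. apply continuous_const.
        intros u Hu. eapply Rle_trans. apply HKL. lra. rewrite Rmult_assoc. apply Rmult_le_compat_l. lra.
        apply IH. lra.
        rewrite RI_scal. rewrite RInt_exp_val by exact HK.
        2:{ intros u. apply continuous_exp_comp.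
        apply (continuous_mult (fun _ => 2*K) (fun u => u - T0)). apply continuous_const.
        apply (continuous_minus (fun u => u) (fun _ => T0)). apply continuous_id. apply continuous_const. }
        assert (0 <= B * (/2)^n) by (apply Rmult_le_pos; [lra | apply pow_le; lra]).
        assert (0 < exp (2*K*(s-T0))) by apply exp_pos.
        simpl. field_simplify; [|lra]. 
        replace (B * (/ 2) ^ n * exp (2 * K * (s - T0)) / 2) with (B * (/ 2) ^ n * exp (2 * K * (s - T0)) / 2 - 0) by ring.
        apply Rle_trans with (B * (/ 2) ^ n * exp (2 * K * (s - T0)) / 2 - B * (/2)^n / 2). lra. lra. }
    exists (B * exp (2*K*Rabs (T - T0))). split.
    { apply Rmult_le_pos. lra. left; apply exp_pos. }
    intros n s Hs. eapply Rle_trans. apply Hn, Hs.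
    assert (exp (2*K*(s - T0)) <= exp (2*K*Rabs (T - T0))).
    { apply exp_le_exp. rewrite Rabs_pos_eq by lra. apply Rmult_le_compat_l; lra. }
    assert (0 <= B * (/2)^n) by (apply Rmult_le_pos; [lra | apply pow_le; lra]).
    replace (B * exp (2 * K * Rabs (T - T0)) * (/ 2) ^ n) with (B * (/2)^n * exp (2 * K * Rabs (T - T0))) by ring.
    apply Rmult_le_compat_l; lra. }
  set (x := fun s => real (Lim_seq (fun n => P n (Rmax T0 s)))).
  assert (Xlim : forall T, exists C, 0 <= C /\ forall s, T0 <= s <= T -> forall n,
            Rabs (P n s - x s) <= 2*C*(/2)^n).
  { intros T. destruct (Bnd T) as [C [HC HCb]]. exists C. split; auto. intros s Hs n.
    destruct (geom_cauchy (fun n => P n s) C (fun n => HCb n s Hs)) as [l [Hl Ht]].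
    assert (Hx : x s = l).
    { unfold x. rewrite Rmax_right by lra. rewrite (is_lim_seq_unique _ _ Hl). reflexivity. }
    rewrite Hx. apply Ht. }
  assert (XT0 : x T0 = x0).
  { unfold x. rewrite Rmax_left by lra. rewrite (Lim_seq_ext _ (fun _ => x0)) by (intros; apply P0).
    rewrite Lim_seq_const. reflexivity. }
  assert (XL0 : forall a b, T0 <= a -> T0 <= b -> Rabs (x a - x b) <= M * Rabs (a - b)).
  { intros a b Ha Hb. destruct (Xlim (Rmax a b)) as [C [HC HCx]].
    assert (Ha' : T0 <= a <= Rmax a b) by (split; [lra | apply Rmax_l]).
    assert (Hb' : T0 <= b <= Rmax a b) by (split; [lra | apply Rmax_r]).
    cut (Rabs (x a - x b) - M * Rabs (a - b) <= 0). lra.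
    apply (le_of_geom _ (4*C)). intros n.
    specialize (HCx a Ha' n) as H1. specialize (HCx b Hb' n) as H2. specialize (PL n a b Ha Hb) as H3.
    pose proof (Rabs_triang (-(P n a - x a)) ((P n a - P n b) + (P n b - x b))) as T1.
    pose proof (Rabs_triang (P n a - P n b) (P n b - x b)) as T2.
    rewrite Rabs_Ropp in T1. replace (- (P n a - x a) + (P n a - P n b + (P n b - x b))) with (x a - x b) in T1 by ring.
    lra. }
  assert (Xmax : forall s, x s = x (Rmax T0 s)).
  { intros s. unfold x. f_equal. apply Lim_seq_ext. intros n. f_equal.
    unfold Rmax at 2. destruct (Rle_dec T0 (Rmax T0 s)) as [|Hn]. reflexivity.
    exfalso. apply Hn, Rmax_l. }
  assert (Xc : forall s, continuous x s).
  { intros s. apply (lip_cont x M s HM). intros u.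
    rewrite (Xmax u), (Xmax s). eapply Rle_trans. apply XL0; apply Rmax_l.
    apply Rmult_le_compat_l. lra. apply Rmax_lip. }
  assert (gxc : forall s, continuous (fun s => G s (x s)) s) by (apply Gc, Xc).
  assert (Xint : forall v, T0 <= v -> x v = x0 + RI (fun s => G s (x s)) T0 v).
  { intros v Hv. destruct (Xlim v) as [C [HC HCx]]. destruct (GL v) as [K [HK HKL]].
    cut (Rabs (x v - (x0 + RI (fun s => G s (x s)) T0 v)) <= 0).
    { intros H. pose proof (Rabs_pos (x v - (x0 + RI (fun s => G s (x s)) T0 v))).
      assert (Rabs (x v - (x0 + RI (fun s => G s (x s)) T0 v)) = 0) by lra.
      apply Rabs_eq_0 in H1. lra. }
    apply (le_of_geom _ (C + K * (2*C) * (v - T0))). intros n.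
    assert (H1 : Rabs (P (S n) v - x v) <= 2*C*(/2)^(S n)) by (apply HCx; lra).
    assert (H2 : Rabs (RI (fun s => G s (P n s)) T0 v - RI (fun s => G s (x s)) T0 v)
                  <= (K * (2*C*(/2)^n)) * (v - T0)).
    { apply RI_diff_const. exact Hv. apply Gc, Pc. exact gxc.
      intros u Hu. eapply Rle_trans. apply HKL. lra. apply Rmult_le_compat_l. lra. apply HCx. lra. }
    change (P (S n) v) with (x0 + RI (fun s => G s (P n s)) T0 v) in H1.
    pose proof (Rabs_triang (-(x0 + RI (fun s => G s (P n s)) T0 v - x v))
                 (RI (fun s => G s (P n s)) T0 v - RI (fun s => G s (x s)) T0 v)) as T1.
    rewrite Rabs_Ropp in T1.
    replace (- (x0 + RI (fun s => G s (P n s)) T0 v - x v) +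
             (RI (fun s => G s (P n s)) T0 v - RI (fun s => G s (x s)) T0 v))
      with (x v - (x0 + RI (fun s => G s (x s)) T0 v)) in T1 by ring.
    simpl pow in H1.
    replace ((C + K * (2 * C) * (v - T0)) * (/ 2) ^ n) with
      (2 * C * (/ 2 * (/ 2) ^ n) + K * (2 * C * (/ 2) ^ n) * (v - T0)) by field.
    lra. }
  exists x. split. exact XT0. split. exact Xc.
  intros v Hv.
  apply is_derive_ext_loc with (f := fun w => x0 + RI (fun s => G s (x s)) T0 w).
  { assert (Hp : 0 < v - T0) by lra. exists (mkposreal _ Hp). intros w Hw.
    change (Rabs (w - v) < v - T0) in Hw. apply Rabs_def2 in Hw. symmetry. apply Xint. lra. }
  pose proof (is_derive_plus (K:=R_AbsRing) (V:=R_NormedModule) (fun _ => x0)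
     (fun w => RI (fun s => G s (x s)) T0 w) v zero (G v (x v))
     (is_derive_const (K:=R_AbsRing) (V:=R_NormedModule) x0 v)
     (RInt_deriv _ T0 gxc v)) as HD.
  rewrite plus_zero_l in HD. exact HD.
Qed.

Lemma lim_pinf_eps f (L : R) : is_lim f p_infty L -> forall eps, 0 < eps ->
  exists V, forall v, V < v -> Rabs (f v - L) < eps.
Proof.
  intros H eps He. destruct (H (fun y => Rabs (y - L) < eps)) as [V HV].
  { exists (mkposreal eps He). intros y Hy. exact Hy. }
  exists V. exact HV.
Qed.

Lemma xp_decr (xp : R -> R) : (forall v, ex_derive xp v) -> (forall v, Derive xp v < 0) ->
  forall a b, a <= b -> xp b <= xp a.
Proof.
  intros Hd Hn a b Hab. destruct (Req_dec a b) as [->|Hne]. lra.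
  destruct (MVT_gen xp a b (Derive xp)) as [c [Hc Heq]].
  - intros x _. apply Derive_correct, Hd.
  - intros x _. apply continuity_pt_filterlim. apply (ex_derive_continuous (K:=R_AbsRing) (V:=R_NormedModule)), Hd.
  - specialize (Hn c). assert (0 < b - a) by lra. nra.
Qed.

Definition clampX (X y : R) := Rmax 0 (Rmin X y).

Lemma clamp_range X y : 0 <= X -> 0 <= clampX X y <= X.
Proof. intros HX. unfold clampX, Rmax, Rmin. repeat destruct Rle_dec; lra. Qed.

Lemma clamp_id X y : 0 <= y <= X -> clampX X y = y.
Proof. intros H. unfold clampX, Rmax, Rmin. repeat destruct Rle_dec; lra. Qed.

Lemma clamp_lip X y z : Rabs (clampX X y - clampX X z) <= Rabs (y - z).
Proof.
  unfold clampX, Rmax, Rmin. apply Rabs_le.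
  pose proof (Rle_abs (y - z)). pose proof (Rle_abs (-(y - z))). rewrite Rabs_Ropp in *.
  repeat destruct Rle_dec; lra.
Qed.

Lemma clamp_cont X y : continuous (clampX X) y.
Proof.
  apply (lip_cont _ 1). lra. intros u. rewrite Rmult_1_l. apply clamp_lip.
Qed.

Lemma bnd_alg H a p X Hm : 0 <= a <= X -> 0 < p <= X -> 0 <= H <= Hm ->
  Rabs (/2 * H * (a - p) * a) <= Hm * X * X / 2.
Proof.
  intros Ha Hp HH.
  assert (Hap : Rabs (a - p) <= X) by (apply Rabs_le; lra).
  rewrite !Rabs_mult. rewrite (Rabs_pos_eq (/2)) by lra. rewrite (Rabs_pos_eq H) by lra.
  rewrite (Rabs_pos_eq a) by lra.
  assert (Rabs (a - p) * a <= X * X) by (apply Rmult_le_compat; try lra; apply Rabs_pos).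
  assert (0 <= Rabs (a - p) * a) by (apply Rmult_le_pos; [apply Rabs_pos | lra]).
  assert (H * (Rabs (a - p) * a) <= Hm * (X * X)) by (apply Rmult_le_compat; lra).
  replace (/ 2 * H * Rabs (a - p) * a) with (/2 * (H * (Rabs (a - p) * a))) by field.
  replace (Hm * X * X / 2) with (/2 * (Hm * (X * X))) by field. lra.
Qed.

Lemma lip_alg ha hb a b p X D Hm : 0 <= a <= X -> 0 <= b <= X -> 0 < p <= X ->
  Rabs (ha - hb) <= D * Rabs (a - b) -> 0 <= hb <= Hm -> 0 <= D ->
  Rabs (/2*ha*(a-p)*a - /2*hb*(b-p)*b) <= /2*(D*(X*X) + Hm*(2*X)) * Rabs (a - b).
Proof.
  intros Ha Hb Hp Hh Hhb HD.
  replace (/2*ha*(a-p)*a - /2*hb*(b-p)*b) with (/2*((ha-hb)*((a-p)*a) + hb*((a-b)*(a+b-p)))) by field.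
  rewrite Rabs_mult, (Rabs_pos_eq (/2)) by lra.
  assert (H1 : Rabs ((a - p) * a) <= X * X).
  { rewrite Rabs_mult. rewrite (Rabs_pos_eq a) by lra. apply Rmult_le_compat; try lra. apply Rabs_pos. apply Rabs_le; lra. }
  assert (H2 : Rabs (a + b - p) <= 2 * X) by (apply Rabs_le; lra).
  pose proof (Rabs_triang ((ha-hb)*((a-p)*a)) (hb*((a-b)*(a+b-p)))) as T.
  rewrite (Rabs_mult (ha-hb)), (Rabs_mult hb), (Rabs_mult (a-b)) in T. rewrite (Rabs_pos_eq hb) in T by lra.
  assert (Rabs (ha - hb) * Rabs ((a - p) * a) <= D * Rabs (a - b) * (X * X)).
  { apply Rmult_le_compat; try apply Rabs_pos; lra. }
  assert (hb * (Rabs (a - b) * Rabs (a + b - p)) <= Hm * (Rabs (a - b) * (2 * X))).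
  { apply Rmult_le_compat; try lra. apply Rmult_le_pos; apply Rabs_pos.
    apply Rmult_le_compat_l. apply Rabs_pos. lra. }
  replace (/ 2 * (D * (X * X) + Hm * (2 * X)) * Rabs (a - b)) with
    (/2 * (D * Rabs (a - b) * (X * X) + Hm * (Rabs (a - b) * (2 * X)))) by field.
  lra.
Qed.

Lemma d1_alg H p q th e hc L : 0 < p -> 0 < th < 1 -> hc - e < H -> L - e < q ->
  (hc - e)*(th-1)/2 - L + e < 0 -> /2*H*(th*p - p)*(th*p) - th*(q*p^2) < 0.
Proof.
  intros Hp Hth HH Hq HC.
  replace (/2*H*(th*p - p)*(th*p) - th*(q*p^2)) with ((th * p^2) * (H*(th-1)/2 - q)) by field.
  assert (0 < th * p^2) by (apply Rmult_lt_0_compat; [lra | apply pow_lt; lra]).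
  assert (H*(th-1)/2 < (hc - e)*(th-1)/2).
  { assert (0 < (H - (hc - e)) * (1 - th)) by (apply Rmult_lt_0_compat; lra). nra. }
  assert (H*(th-1)/2 - q < 0) by lra.
  assert (0 < (th * p^2) * (-(H*(th-1)/2 - q))) by (apply Rmult_lt_0_compat; lra).
  lra.
Qed.

Lemma d2_alg B H x p X : 0 < x <= X -> 0 < p <= X -> 0 <= H -> H*X/2 < B ->
  -(2*B)*x - /2*H*(x-p)*x < 0.
Proof.
  intros Hx Hp HH HB.
  assert (Hk : -(H*X/2) <= /2*H*(x-p)).
  { assert (H * (x - p) >= - (H * X)) by nra. lra. }
  assert (0 < x * (B + (/2*H*(x-p)))) by (apply Rmult_lt_0_compat; lra).
  assert (0 <= H * X) by (apply Rmult_le_pos; lra).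
  assert (0 < x * B) by (apply Rmult_lt_0_compat; lra).
  replace (-(2*B)*x - /2*H*(x-p)*x) with (-(x * (B + (/2*H*(x-p)))) - x * B) by field.
  lra.
Qed.

Definition Gf (h : R -> R -> R) (xp : R -> R) (X s y : R) :=
  /2 * h s (clampX X y) * (clampX X y - xp s) * clampX X y.

Theorem corollary3
  (rc : R) (h : R -> R -> R) (dh : R -> R -> R) (xp : R -> R) (hc L : R)
  (Hrc : 0 < rc)
  (Hhcont : forall v x, -rc < x -> continuous (fun p : R * R => h (fst p) (snd p)) (v, x))
  (Hdh : forall v x, -rc < x -> is_derive (h v) x (dh v x))
  (Hdhcont : forall v x, -rc < x -> continuous (fun p : R * R => dh (fst p) (snd p)) (v, x))
  (Hhpos : forall v x, -rc < x -> 0 < h v x)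
  (Hhc : filterlim (fun p : R * R => h (fst p) (snd p))
           (filter_prod (Rbar_locally p_infty) (locally 0)) (locally hc))
  (Hxp_der : forall v, ex_derive xp v)
  (Hxp_dec : forall v, Derive xp v < 0)
  (Hxp_pos : forall v, 0 < xp v)
  (Hxp_lim : is_lim xp p_infty 0)
  (HL : is_lim (fun v => Derive xp v / (xp v) ^ 2) p_infty L)
  (HLbound : - hc / 2 < L) :
  type2 h xp.
Proof.
  assert (HL0 : L <= 0).
  { apply Rnot_lt_le. intros Hp. destruct (lim_pinf_eps _ _ HL L Hp) as [V HV].
    specialize (HV (V+1)). assert (V < V + 1) by lra. specialize (HV H).
    apply Rabs_def2 in HV.
    assert (Derive xp (V+1) / xp (V+1) ^ 2 < 0).
    { unfold Rdiv. apply Rmult_neg_pos. apply Hxp_dec. apply Rinv_0_lt_compat, pow_lt, Hxp_pos. }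
    lra. }
  remember (L + hc / 2) as gap eqn:Egap.
  assert (Hgap : 0 < gap) by lra.
  assert (Hhc0 : 0 < hc) by lra.
  remember (gap / 4) as eps eqn:Eeps.
  assert (Heps : 0 < eps) by lra.
  remember (gap / (2 * hc)) as th eqn:Eth.
  assert (Hth : 0 < th) by (rewrite Eth; apply Rdiv_lt_0_compat; lra).
  assert (Hthhc : th * hc = gap / 2) by (rewrite Eth; field; lra).
  assert (Hth1 : th <= 1/4) by nra.
  assert (C1 : 0 < hc - eps) by lra.
  assert (C2 : (hc - eps) * (th - 1) / 2 - L + eps < 0).
  { assert (0 < eps * th) by (apply Rmult_lt_0_compat; lra).
    replace ((hc - eps) * (th - 1) / 2 - L + eps) with (th * hc / 2 - (L + hc/2) - eps * th / 2 + 3 * eps / 2) by field.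
    rewrite Hthhc. lra. }
  destruct (Hhc (fun y => Rabs (y - hc) < eps)) as [Q R0 HQ HR HP].
  { exists (mkposreal eps Heps). intros y Hy. exact Hy. }
  destruct HQ as [V1 HV1]. destruct HR as [del Hdel].
  assert (Hhb : forall v y, V1 < v -> Rabs y < del -> Rabs (h v y - hc) < eps).
  { intros v y Hv Hy. apply (HP v y (HV1 v Hv)). apply Hdel. change (Rabs (y - 0) < del).
    rewrite Rminus_0_r. exact Hy. }
  destruct (lim_pinf_eps _ _ HL eps Heps) as [V2 HV2].
  assert (Hm : 0 < Rmin (del / 2) (rc / 2)).
  { apply Rmin_glb_lt. pose proof (cond_pos del). lra. lra. }
  destruct (lim_pinf_eps _ _ Hxp_lim _ Hm) as [V3 HV3].
  remember (Rmax (Rmax V1 V2) V3 + 1) as T0 eqn:ET0.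
  assert (HT1 : V1 < T0). { rewrite ET0. pose proof (Rmax_l V1 V2). pose proof (Rmax_l (Rmax V1 V2) V3). lra. }
  assert (HT2 : V2 < T0). { rewrite ET0. pose proof (Rmax_r V1 V2). pose proof (Rmax_l (Rmax V1 V2) V3). lra. }
  assert (HT3 : V3 < T0). { rewrite ET0. pose proof (Rmax_r (Rmax V1 V2) V3). lra. }
  remember (xp T0) as X eqn:EX.
  assert (HX0 : 0 < X) by (rewrite EX; apply Hxp_pos).
  assert (HXd : X < del / 2 /\ X < rc / 2).
  { specialize (HV3 T0 HT3). rewrite Rminus_0_r, Rabs_pos_eq in HV3 by (left; apply Hxp_pos).
    pose proof (Rmin_l (del/2) (rc/2)). pose proof (Rmin_r (del/2) (rc/2)). rewrite <- EX in HV3. lra. }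
  assert (Hxpd := xp_decr xp Hxp_der Hxp_dec).
  assert (HxpX : forall v, T0 <= v -> 0 < xp v <= X).
  { intros v Hv. split. apply Hxp_pos. rewrite EX. apply Hxpd, Hv. }
  assert (Hxpc : forall v, continuous xp v).
  { intros v. apply (ex_derive_continuous (K:=R_AbsRing) (V:=R_NormedModule)), Hxp_der. }
  assert (HhX : forall v y, T0 <= v -> 0 <= y <= X -> hc - eps < h v y < hc + eps).
  { intros v y Hv Hy. assert (Rabs (h v y - hc) < eps).
    { apply Hhb. lra. rewrite Rabs_pos_eq by lra. lra. }
    apply Rabs_def2 in H. lra. }
  assert (Hq : forall v, T0 <= v -> L - eps < Derive xp v / xp v ^ 2 < L + eps).
  { intros v Hv. assert (H := HV2 v ltac:(lra)). apply Rabs_def2 in H. lra. }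
  assert (HX0' : 0 <= X) by lra.
  assert (Gc : forall phi : R -> R, (forall s, continuous phi s) ->
            forall s, continuous (fun s => Gf h xp X s (phi s)) s).
  { intros phi Hphi s. unfold Gf.
    assert (Hpsi : continuous (fun s => clampX X (phi s)) s).
    { apply (continuous_comp phi (clampX X)). apply Hphi. apply clamp_cont. }
    assert (Hh : continuous (fun s => h s (clampX X (phi s))) s).
    { apply (continuous_comp_2 (fun s => s) (fun s => clampX X (phi s)) h). apply continuous_id. exact Hpsi.
      apply Hhcont. pose proof (clamp_range X (phi s) HX0'). lra. }
    apply (continuous_mult (fun s => /2 * h s (clampX X (phi s)) * (clampX X (phi s) - xp s))
             (fun s => clampX X (phi s))); [|exact Hpsi].
    apply (continuous_mult (fun s => /2 * h s (clampX X (phi s))) (fun s => clampX X (phi s) - xp s)).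
    apply (continuous_mult (fun _ => /2) (fun s => h s (clampX X (phi s)))). apply continuous_const. exact Hh.
    apply (continuous_minus (fun s => clampX X (phi s)) xp). exact Hpsi. apply Hxpc. }
  assert (HXX : 0 <= (hc + eps) * X * X) by (apply Rmult_le_pos; [apply Rmult_le_pos|]; lra).
  assert (HM : 0 < (hc + eps) * X * X / 2 + 1) by lra.
  assert (Gb : forall s y, T0 <= s -> Rabs (Gf h xp X s y) <= (hc + eps) * X * X / 2 + 1).
  { intros s y Hs. unfold Gf. pose proof (clamp_range X y HX0') as Ra.
    pose proof (HhX s (clampX X y) Hs Ra). pose proof (HxpX s Hs).
    eapply Rle_trans. apply (bnd_alg _ _ _ X (hc + eps)); lra. lra. }
  assert (GL : forall T, exists K, 0 < K /\ forall s y z, T0 <= s <= T ->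
            Rabs (Gf h xp X s y - Gf h xp X s z) <= K * Rabs (y - z)).
  { intros T. destruct (bound2d dh T0 (Rmax T T0) (-X) (2*X)) as [D HD].
    { intros v y Hv Hy. apply Hdhcont. lra. }
    assert (0 <= Rabs D * (X * X)) by (apply Rmult_le_pos; [apply Rabs_pos | apply Rmult_le_pos; lra]).
    assert (0 <= (hc + eps) * (2 * X)) by (apply Rmult_le_pos; lra).
    exists (/2*(Rabs D*(X*X) + (hc+eps)*(2*X)) + 1). split. lra.
    intros s y z Hs. unfold Gf.
    pose proof (clamp_range X y HX0') as Ra. pose proof (clamp_range X z HX0') as Rb.
    pose proof (clamp_lip X y z) as Lc.
    pose proof (HhX s (clampX X z) ltac:(lra) Rb) as Hhz. pose proof (HxpX s ltac:(lra)) as Hp.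
    assert (Hv : Rabs (h s (clampX X y) - h s (clampX X z)) <= Rabs D * Rabs (clampX X y - clampX X z)).
    { apply (bounded_variation (h s) (dh s) (Rabs D) (clampX X z) (clampX X y)).
      intros t Ht. assert (Rabs (clampX X y - clampX X z) <= X) by (apply Rabs_le; lra).
      pose proof (Rle_abs (t - clampX X z)). pose proof (Rle_abs (-(t - clampX X z))).
      rewrite Rabs_Ropp in *.
      assert (Hs' : T0 <= s <= Rmax T T0) by (split; [lra | eapply Rle_trans; [apply Hs | apply Rmax_l]]).
      split. apply Hdh. lra. eapply Rle_trans. apply (HD s t Hs'). lra. apply Rle_abs. }
    eapply Rle_trans. apply (lip_alg _ _ _ _ (xp s) X (Rabs D) (hc + eps)); try lra. apply Rabs_pos.
    apply Rmult_le_compat. apply Rmult_le_pos; lra. apply Rabs_pos. lra. exact Lc. }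
  destruct (picard (Gf h xp X) T0 (th * X / 2) _ HM Gc Gb GL) as [x [Hx0 [Hxc Hxd]]].
  remember ((hc + eps) * X / 2 + 1) as B eqn:EB.
  assert (HB0 : 0 < B). { assert (0 <= (hc + eps) * X) by (apply Rmult_le_pos; lra). lra. }
  assert (Hexpc : forall v, continuous (fun v => th * X / 4 * exp (-(2*B) * (v - T0))) v).
  { intros v. apply (continuous_mult (fun _ => th * X / 4) (fun v => exp (-(2*B) * (v - T0)))).
    apply continuous_const. apply continuous_exp_comp.
    apply (continuous_mult (fun _ => -(2*B)) (fun u => u - T0)). apply continuous_const.
    apply (continuous_minus (fun u => u) (fun _ => T0)). apply continuous_id. apply continuous_const. }
  assert (Hbar := barrier T0 (fun v => x v - th * xp v) (fun v => th * X / 4 * exp (-(2*B) * (v - T0)) - x v)).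
  assert (HthX : 0 < th * X) by (apply Rmult_lt_0_compat; lra).
  assert (HB : forall v, T0 <= v -> x v - th * xp v < 0 /\
                 th * X / 4 * exp (-(2*B) * (v - T0)) - x v < 0).
  { apply Hbar.
    - intros v _. apply (continuous_minus x (fun v => th * xp v)). apply Hxc.
      apply (continuous_mult (fun _ => th) xp). apply continuous_const. apply Hxpc.
    - intros v _. apply (continuous_minus (fun v => th * X / 4 * exp (-(2*B) * (v - T0))) x).
      apply Hexpc. apply Hxc.
    - cbv beta. rewrite Hx0, <- EX. lra.
    - cbv beta. rewrite Hx0. replace (T0 - T0) with 0 by ring. rewrite Rmult_0_r, exp_0. lra.
    - intros v Hv H1 H2 Hz. cbv beta in *.
      assert (Hexp : 0 < exp (-(2*B)*(v - T0))) by apply exp_pos.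
      assert (0 < th * X / 4 * exp (-(2*B)*(v - T0))) by (apply Rmult_lt_0_compat; lra).
      pose proof (HxpX v ltac:(lra)) as Hp.
      assert (Hxv : x v = th * xp v) by lra.
      assert (th * xp v <= xp v) by (assert (0 <= (1 - th) * xp v) by (apply Rmult_le_pos; lra); lra).
      exists (Gf h xp X v (x v) - th * Derive xp v). split.
      + apply (is_derive_minus x (fun v => th * xp v)). apply Hxd; lra.
        apply is_derive_scal. apply Derive_correct, Hxp_der.
      + unfold Gf. rewrite clamp_id by lra. rewrite Hxv.
        pose proof (Hq v ltac:(lra)) as Hqv. pose proof (HhX v (th * xp v) ltac:(lra) ltac:(lra)) as Hhv.
        assert (xp v <> 0) by lra.
        replace (Derive xp v) with ((Derive xp v / xp v ^ 2) * xp v ^ 2) by (field; assumption).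
        apply (d1_alg _ _ _ th eps hc L); lra.
    - intros v Hv H1 H2 Hz. cbv beta in *.
      assert (Hexp : 0 < exp (-(2*B)*(v - T0))) by apply exp_pos.
      assert (0 < th * X / 4 * exp (-(2*B)*(v - T0))) by (apply Rmult_lt_0_compat; lra).
      pose proof (HxpX v ltac:(lra)) as Hp.
      assert (Hxv : x v = th * X / 4 * exp (-(2*B)*(v - T0))) by lra.
      assert (th * xp v <= xp v) by (assert (0 <= (1 - th) * xp v) by (apply Rmult_le_pos; lra); lra).
      exists (th * X / 4 * (exp (-(2*B)*(v - T0)) * (-(2*B))) - Gf h xp X v (x v)). split.
      + apply (is_derive_minus (fun v => th * X / 4 * exp (-(2*B) * (v - T0))) x).
        * apply is_derive_scal. auto_derive. auto. unfold Rminus. ring.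
        * apply Hxd; lra.
      + unfold Gf. rewrite clamp_id by lra.
        replace (th * X / 4 * (exp (-(2*B)*(v - T0)) * (-(2*B)))) with (-(2*B) * x v) by (rewrite Hxv; field).
        pose proof (HhX v (x v) ltac:(lra) ltac:(lra)) as Hhv.
        assert (0 <= (hc + eps - h v (x v)) * X) by (apply Rmult_le_pos; lra).
        apply (d2_alg B (h v (x v)) (x v) (xp v) X); lra. }
  exists (T0 + 1), x. split.
  - intros v Hv. destruct (HB v ltac:(lra)) as [H1 H2].
    assert (Hexp : 0 < exp (-(2*B)*(v - T0))) by apply exp_pos.
    assert (0 < th * X / 4 * exp (-(2*B)*(v - T0))) by (apply Rmult_lt_0_compat; lra).
    pose proof (HxpX v ltac:(lra)) as Hp.
    assert (th * xp v <= xp v) by (assert (0 <= (1 - th) * xp v) by (apply Rmult_le_pos; lra); lra).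
    pose proof (Hxd v ltac:(lra)) as Hd. unfold Gf in Hd. rewrite clamp_id in Hd by lra.
    replace (x v - 0) with (x v) by ring. exact Hd.
  - intros v Hv. destruct (HB v ltac:(lra)) as [H1 H2].
    assert (Hexp : 0 < exp (-(2*B)*(v - T0))) by apply exp_pos.
    assert (0 < th * X / 4 * exp (-(2*B)*(v - T0))) by (apply Rmult_lt_0_compat; lra).
    pose proof (HxpX v ltac:(lra)) as Hp.
    assert (th * xp v < xp v) by (assert (0 < (1 - th) * xp v) by (apply Rmult_lt_0_compat; lra); lra).
    lra.
Qed.
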